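(* Let $r$, $s$, $c$, $d$ and $a_n$ be any integers with $r\neq0$ and $r+d\neq0$, let $n$ be a positive integer, and assume $U_d$, $U_r$, $U_{r+d}$ are nonzero. Then \[ \begin{split} &\sum_{a_{n-1}=c}^{a_n}\sum_{a_{n-2}=c}^{a_{n-1}}\cdots\sum_{a_0=c}^{a_1}\left(\frac{U_d}{U_{r+d}}\right)^{a_0}W_{ra_0+s} =\frac{(-1)^nU_d^{n+a_n}}{q^{dn}U_r^nU_{r+d}^{a_n}}W_{(r+d)n+ra_n+s}\\ &\qquad-\left(\frac{U_d}{U_{r+d}}\right)^{c-1}\sum_{j=0}^{n-1}\frac{(-1)^{n-j}}{q^{d(n-j)}}\left(\frac{U_d}{U_r}\right)^{n-j}W_{r(n-j+c-1)+d(n-j)+s}\binom{a_n+j-c}{j}. \end{split} \]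
   Context: Let $a,b,p,q$ be complex numbers with $p\neq0$, $q\neq0$. The Horadam sequence $W_j=W_j(a,b;p,q)$ is defined by $W_0=a$, $W_1=b$, $W_j=pW_{j-1}-qW_{j-2}$ for $j\ge2$, and extended to negative indices by $W_{-m}=(pW_{-m+1}-W_{-m+2})/q$, so the recurrence holds for all integers. $U_j=W_j(0,1;p,q)$ is the Lucas sequence of the first kind. For integers $c,m$ and a function $f$ on the integers, $\sum_{k=c}^m f(k)$ denotes the usual sum if $m\ge c$, equals $0$ if $m=c-1$, and equals $-\sum_{k=m+1}^{c-1}f(k)$ if $m\le c-2$. The nested sum $\sum_{a_{n-1}=c}^{a_n}\cdots\sum_{a_0=c}^{a_1}g(a_0)$ is the iterated sum with $n$ summation signs: innermost over $a_0$ from $c$ to $a_1$, then $a_1$ from $c$ to $a_2$, ..., outermost $a_{n-1}$ from $c$ to $a_n$. For an integer $j\ge0$ and any number $y$, $\binom{y}{j}=y(y-1)\cdots(y-j+1)/j!$. *)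

(* Defs.v *)
(* Complex numbers are modelled as R[i] (mathcomp-real-closed
   `complex`) for an arbitrary R : realType; the auxiliary definitions below
   are stated over an arbitrary field F. *)
From mathcomp Require Import all_boot all_order all_algebra.
From mathcomp Require Export reals complex.
Set Implicit Arguments. Unset Strict Implicit. Unset Printing Implicit Defensive.
Import Order.TTheory GRing.Theory Num.Theory.
Local Open Scope ring_scope.

Section Defs.
Variable F : fieldType.

(* forward step (W_j, W_{j+1}) |-> (W_{j+1}, W_{j+2}) *)
Definition hfwd (p q : F) (x : F * F) : F * F := (x.2, p * x.2 - q * x.1).
Definition hbwd (p q : F) (x : F * F) : F * F := ((p * x.1 - x.2) / q, x.1).

Definition horadam (a b p q : F) (j : int) : F :=
  match j with
  | Posz n => (iter n (hfwd p q) (a, b)).1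
  | Negz n => (iter n.+1 (hbwd p q) (a, b)).1   (* index -(n+1) *)
  end.

Definition lucasU (p q : F) (j : int) : F := horadam 0 1 p q j.

(* generalized sum \sum_{k=c}^m f k with the paper's convention for m < c *)
Definition gsum (c m : int) (f : int -> F) : F :=
  if (c <= m)%R then \sum_(i < absz (m - c + 1)%R) f (c + i%:Z)
  else - \sum_(i < absz (c - 1 - m)%R) f (m + 1 + i%:Z).

(* nested sum with n summation signs, innermost variable a_0, outer bound m *)
Fixpoint nested (n : nat) (c : int) (g : int -> F) : int -> F :=
  match n with
  | 0 => g
  | n'.+1 => fun m => gsum c m (nested n' c g)
  end.

Definition gbinom (y : F) (j : nat) : F :=
  (\prod_(i < j) (y - i%:R)) / (j`!)%:R.
End Defs.

(* Main.v *)
Require Import Defs.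
From mathcomp Require Import all_boot all_order all_algebra.
From mathcomp Require Import reals complex.
From mathcomp Require Import ring lra zify.
Import Order.TTheory GRing.Theory Num.Theory.
Local Open Scope ring_scope.

Lemma int_ind_gen (P : int -> Prop) (k : int) :
  P k -> (forall j, P j -> P (j + 1)) -> (forall j, P (j + 1) -> P j) ->
  forall j, P j.
Proof.
move=> Pk Hf Hb.
have H : forall n : nat, P (k + n%:Z) /\ P (k - n%:Z).
  elim=> [|n [IH1 IH2]]; first by have -> : k + 0%:Z = k by ring; have -> : k - 0%:Z = k by ring.
  split.
    have -> : k + (n.+1)%:Z = (k + n%:Z) + 1 by rewrite -addn1 PoszD addrA.
    exact: Hf.
  apply: Hb.
  have -> : k - (n.+1)%:Z + 1 = k - n%:Z by rewrite -addn1 PoszD; ring.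
  exact: IH2.
move=> j.
have -> : j = k + (j - k) by ring.
case: (j - k) => n; first exact: (H n).1.
rewrite NegzE; exact: (H n.+1).2.
Qed.

Section Hor.
Variable F : fieldType.
Variables p q : F.
Hypothesis hq : q != 0.

Definition isrec (f : int -> F) := forall j, f (j + 2) = p * f (j + 1) - q * f j.

Definition Sst (a b : F) (j : int) : F * F :=
  match j with
  | Posz n => iter n (hfwd p q) (a, b)
  | Negz n => iter n.+1 (hbwd p q) (a, b)
  end.

Lemma hfwd_bwd x : hfwd p q (hbwd p q x) = x.
Proof. case: x => x1 x2; rewrite /hfwd /hbwd /=; by congr pair; field. Qed.

Lemma Sst_succ a b j : Sst a b (j + 1) = hfwd p q (Sst a b j).
Proof.
case: j => [n|[|n]].
- have -> : Posz n + 1 = Posz n.+1 by rewrite -addn1 PoszD.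
  by [].
- have -> : Negz 0 + 1 = 0 by [].
  by rewrite /= hfwd_bwd.
- have -> : Negz n.+1 + 1 = Negz n by rewrite !NegzE -addn1 PoszD; ring.
  rewrite /=. by rewrite hfwd_bwd.
Qed.

Lemma horadam_rec a b : isrec (horadam a b p q).
Proof.
have E : forall j, horadam a b p q j = (Sst a b j).1 by case.
move=> j; rewrite !E.
have -> : j + 2 = j + 1 + 1 by rewrite -addrA.
rewrite !Sst_succ /=. done.
Qed.

Lemma rec_uniq f g k : isrec f -> isrec g -> f k = g k -> f (k + 1) = g (k + 1) ->
  forall j, f j = g j.
Proof.
move=> rf rg h0 h1 j.
suff: f j = g j /\ f (j + 1) = g (j + 1) by case.
apply: (@int_ind_gen (fun j => f j = g j /\ f (j + 1) = g (j + 1)) k (conj h0 h1)) j.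
- move=> i [e0 e1]; split=> //.
  by rewrite -addrA rf rg e0 e1.
- move=> i [e0 e1]; split=> //.
  have e2 : f (i + 2) = g (i + 2) by rewrite -[2]/(1+1) addrA.
  apply: (mulfI hq).
  have Hf := rf i; have Hg := rg i.
  have -> : q * f i = p * f (i + 1) - f (i + 2) by rewrite Hf; ring.
  have -> : q * g i = p * g (i + 1) - g (i + 2) by rewrite Hg; ring.
  by rewrite e0 e2.
Qed.
End Hor.
Section Ident.
Variable F : fieldType.
Variables a b p q : F.
Hypothesis hq : q != 0.
Local Notation W := (horadam a b p q).
Local Notation U := (horadam 0 1 p q).

Lemma U0 : U 0 = 0. Proof. by []. Qed.
Lemma U1 : U 1 = 1. Proof. by []. Qed.

Lemma Dval t n : U (n + 1) * W (t + n) - U n * W (t + n + 1) = q ^ n * W t.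
Proof.
pose D n := U (n + 1) * W (t + n) - U n * W (t + n + 1).
have step : forall n, D (n + 1) = q * D n.
  move=> m; rewrite /D.
  have -> : m + 1 + 1 = m + 2 by rewrite -addrA.
  have -> : t + (m + 1) + 1 = (t + m) + 2 by rewrite -!addrA.
  rewrite (@horadam_rec _ p q hq 0 1 m) (@horadam_rec _ p q hq a b (t + m)) addrA; ring.
apply: (@int_ind_gen (fun n => D n = q ^ n * W t) 0) n.
- rewrite /D add0r U1. rewrite -[U 0]/(0:F) expr0z addr0; ring.
- by move=> j IH; rewrite step IH expfzDr // expr1z; ring.
- move=> j; rewrite step expfzDr // expr1z => H.
  apply: (mulfI hq); rewrite H; ring.
Qed.

Lemma ident m n t : U m * W (t + n) - U n * W (t + m) = q ^ n * U (m - n) * W t.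
Proof.
move: m.
apply: (@rec_uniq F p q hq (fun m => U m * W (t + n) - U n * W (t + m))
         (fun m => q ^ n * U (m - n) * W t) n).
- move=> m /=.
  have -> : t + (m + 2) = (t + m) + 2 by rewrite addrA.
  rewrite (@horadam_rec _ p q hq 0 1 m) (@horadam_rec _ p q hq a b (t + m)) !addrA; ring.
- move=> m /=.
  have -> : m + 2 - n = (m - n) + 2 by ring.
  have -> : m + 1 - n = (m - n) + 1 by ring.
  rewrite (@horadam_rec _ p q hq 0 1 (m - n)); ring.
- by rewrite /= !subrr -[U 0]/(0:F); ring.
- rewrite /=.
  have -> : n + 1 - n = 1 by ring.
  by rewrite U1 mulr1 -(@Dval t n) addrA.
Qed.
End Ident.
Section Sums.
Variable F : fieldType.

Lemma tele_nat N (H : nat -> F) : \sum_(i < N) (H i.+1 - H i) = H N - H 0%N.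
Proof.
elim: N => [|N IH]; first by rewrite big_ord0 subrr.
by rewrite big_ord_recr /= IH; ring.
Qed.

Lemma eq_gsum c m (f g : int -> F) : (forall k, f k = g k) -> gsum c m f = gsum c m g.
Proof.
move=> e; rewrite /gsum; case: ifP => _.
  by apply: eq_bigr => i _; rewrite e.
by congr (- _); apply: eq_bigr => i _; rewrite e.
Qed.

Lemma gsum_tele c m (G : int -> F) :
  gsum c m (fun k => G k - G (k - 1)) = G m - G (c - 1).
Proof.
rewrite /gsum; case: ifP => cm.
  have := tele_nat (absz (m - c + 1)%R) (fun i => G (c - 1 + i%:Z)).
  have hN : (Posz (absz (m - c + 1)%R)) = m - c + 1 by rewrite gez0_abs; lia.
  rewrite hN.
  have -> : c - 1 + (m - c + 1) = m by ring.
  have -> : c - 1 + (0%N)%:Z = c - 1 by ring.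
  move=> <-; apply: eq_bigr => i _.
  have -> : c - 1 + (i.+1)%:Z = c + i%:Z by rewrite -addn1 PoszD; ring.
  by have -> : c - 1 + i%:Z = c + i%:Z - 1 by ring.
have := tele_nat (absz (c - 1 - m)%R) (fun i => G (m + i%:Z)).
have hN : (Posz (absz (c - 1 - m)%R)) = c - 1 - m by rewrite gez0_abs; lia.
rewrite hN.
have -> : m + (c - 1 - m) = c - 1 by ring.
have -> : m + (0%N)%:Z = m by ring.
move=> e.
have -> : \sum_(i < absz (c - 1 - m)%R) (G (m + 1 + i%:Z) - G (m + 1 + i%:Z - 1)) = G (c - 1) - G m.
  rewrite -e; apply: eq_bigr => i _.
  have -> : m + (i.+1)%:Z = m + 1 + i%:Z by rewrite -addn1 PoszD; ring.
  by have -> : m + 1 + i%:Z - 1 = m + i%:Z by ring.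
ring.
Qed.

Lemma gbinom0 y : gbinom y 0 = 1 :> F.
Proof. by rewrite /gbinom big_ord0 fact0 divr1. Qed.

Lemma gbinom_nat_zero (i : nat) : gbinom (i%:R : F) i.+1 = 0.
Proof. by rewrite /gbinom big_ord_recr /= subrr mulr0 mul0r. Qed.

End Sums.

Lemma gbinom_pascal (R : numFieldType) (y : R) j :
  gbinom y j.+1 - gbinom (y - 1) j.+1 = gbinom (y - 1) j.
Proof.
rewrite /gbinom big_ord_recl big_ord_recr /=.
set P := \prod_(i < j) (y - 1 - i%:R).
have -> : \prod_(i < j) (y - (bump 0 i)%:R) = P.
  by apply: eq_bigr => i _; rewrite /bump /= add1n -addn1 natrD; ring.
rewrite factS natrM.
have h1 : (j`!)%:R != 0 :> R by rewrite pnatr_eq0 -lt0n fact_gt0.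
have h2 : (j.+1)%:R != 0 :> R by rewrite pnatr_eq0.
rewrite -addn1 natrD in h2 *.
field.
by rewrite h1 h2.
Qed.

Theorem theorem5 (R : realType) (a b p q : R[i]) (r s c d an : int) (n : nat) :
  p != 0 -> q != 0 -> r != 0 -> r + d != 0 -> (0 < n)%N ->
  lucasU p q d != 0 -> lucasU p q r != 0 -> lucasU p q (r + d) != 0 ->
  let W := horadam a b p q in
  let U := lucasU p q in
  nested n c (fun a0 => (U d / U (r + d)) ^ a0 * W (r * a0 + s)) an =
    (-1) ^+ n * U d ^ (n%:Z + an) / (q ^ (d * n%:Z) * U r ^+ n * U (r + d) ^ an)
      * W ((r + d) * n%:Z + r * an + s)
    - (U d / U (r + d)) ^ (c - 1) *
      \sum_(j < n)
        ((-1) ^+ (n - j) / q ^ (d * (n - j)%N%:Z) * (U d / U r) ^+ (n - j)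
         * W (r * ((n - j)%N%:Z + c - 1) + d * (n - j)%N%:Z + s)
         * gbinom ((an + j%:Z - c)%:~R) j).
Proof.
move=> hp hq hr hrd hn hUd hUr hUrd W U.
have key : forall t, U (r + d) * W (t + d) - U d * W (t + (r + d)) = q ^ d * U r * W t.
  move=> t; have := @ident _ a b p q hq (r + d) d t; rewrite addrK; exact.
have {}hUd : U d != 0 := hUd.
have {}hUr : U r != 0 := hUr.
have {}hUrd : U (r + d) != 0 := hUrd.
clearbody W U.
pose x := U d / U (r + d).
pose T := fun (n : nat) (m : int) => (-1) ^+ n * U d ^ (n%:Z + m) /
   (q ^ (d * n%:Z) * U r ^+ n * U (r + d) ^ m) * W ((r + d) * n%:Z + r * m + s).
pose C := fun k : nat => (-1) ^+ k / q ^ (d * k%:Z) * (U d / U r) ^+ k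
   * W (r * (k%:Z + c - 1) + d * k%:Z + s).
pose Phi := fun (n : nat) (m : int) => T n m - x ^ (c - 1) *
   \sum_(j < n) (C (n - j)%N * gbinom ((m + j%:Z - c)%:~R) j).
suff H : forall n m, nested n c (fun a0 => x ^ a0 * W (r * a0 + s)) m = Phi n m.
  exact: H.
have Tdiff : forall n m, T n.+1 m - T n.+1 (m - 1) = T n m.
  move=> k m; rewrite /T.
  have hn1 : (k.+1)%:Z = k%:Z + 1 by rewrite -addn1 PoszD.
  rewrite hn1.
  set t := (r + d) * k%:Z + r * m + s.
  have e1 : (r + d) * (k%:Z + 1) + r * m + s = t + (r + d) by rewrite /t; ring.
  have e2 : (r + d) * (k%:Z + 1) + r * (m - 1) + s = t + d by rewrite /t; ring.
  have e3 : k%:Z + 1 + m = (k%:Z + m) + 1 by ring.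
  have e4 : k%:Z + 1 + (m - 1) = k%:Z + m by ring.
  have e5 : d * (k%:Z + 1) = d * k%:Z + d by ring.
  rewrite e1 e2 e3 e4 e5 (expfzDr (k%:Z + m) 1 hUd) (expfzDr (d * k%:Z) d hq).
  rewrite (expfzDr m (-1) hUrd) exprN1 expr1z !exprS.
  have hw : W (t + (r + d)) = (U (r + d) * W (t + d) - q ^ d * U r * W t) / U d.
    by rewrite -key; field.
  rewrite hw.
  have n1 := expfz_neq0 (d * k%:Z) hq.
  have n2 := expfz_neq0 d hq.
  have n3 := expfz_neq0 m hUrd.
  have n4 : U r ^+ k != 0 by rewrite expf_neq0.
  by field; rewrite ?n1 ?n2 ?n3 ?n4 ?hUd ?hUr ?hUrd.
have Phi0 : forall k, Phi k.+1 (c - 1) = 0.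
  move=> k; rewrite /Phi big_ord_recl /= subn0 gbinom0.
  rewrite big1 => [|i _]; last first.
    rewrite /bump leq0n add1n.
    have -> : c - 1 + (i.+1)%:Z - c = i%:Z by rewrite -addn1 PoszD; ring.
    by rewrite gbinom_nat_zero mulr0.
  rewrite addr0 mulr1 /T /C /x.
  have -> : r * ((k.+1)%:Z + c - 1) + d * (k.+1)%:Z + s
          = (r + d) * (k.+1)%:Z + r * (c - 1) + s by ring.
  rewrite (expfzDr (k.+1)%:Z (c - 1) hUd) -exprnP expfzMl -expfV expr_div_n.
  have n1 := expfz_neq0 (d * (k.+1)%:Z) hq.
  have n3 := expfz_neq0 (c - 1) hUrd.
  have n4 : U r ^+ k.+1 != 0 by rewrite expf_neq0.
  have n5 : U d ^+ k.+1 != 0 by rewrite expf_neq0.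
  by field; rewrite ?n1 ?n3 ?n4 ?n5 ?hUd ?hUr ?hUrd.
have Pdiff : forall k m, Phi k.+1 m - Phi k.+1 (m - 1) = Phi k m.
  move=> k m; rewrite /Phi !big_ord_recl /= !subn0 !gbinom0.
  have b0 : forall i, bump 0 i = i.+1 by [].
  have hS : \sum_(i < k) (C (k.+1 - bump 0 i)%N * gbinom ((m + (bump 0 i)%:Z - c)%:~R) (bump 0 i))
     - \sum_(i < k) (C (k.+1 - bump 0 i)%N * gbinom ((m - 1 + (bump 0 i)%:Z - c)%:~R) (bump 0 i))
     = \sum_(j < k) (C (k - j)%N * gbinom ((m + j%:Z - c)%:~R) j).
    rewrite -sumrB; apply: eq_bigr => i _; rewrite !b0 -mulrBr subSS.
    have eA : ((m - 1 + (i.+1)%:Z - c)%:~R : R[i]) = (m + (i.+1)%:Z - c)%:~R - 1.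
      by rewrite (_ : m - 1 + _ - c = (m + (i.+1)%:Z - c) - 1) ?intrB //; ring.
    have eB : ((m + i%:Z - c)%:~R : R[i]) = (m + (i.+1)%:Z - c)%:~R - 1.
      by rewrite (_ : m + i%:Z - c = (m + (i.+1)%:Z - c) - 1) ?intrB // -addn1 PoszD; ring.
    by rewrite eA eB gbinom_pascal.
  rewrite -hS -(Tdiff k m); ring.
move=> k; elim: k => [|k IH] m.
  rewrite /= /Phi big_ord0 mulr0 subr0 /T /x.
  have -> : (0%N)%:Z + m = m by ring.
  have -> : d * (0%N)%:Z = 0 by ring.
  have -> : (r + d) * (0%N)%:Z + r * m + s = r * m + s by ring.
  rewrite expr0z !expr0 expfzMl -expfV.
  have n3 := expfz_neq0 m hUrd.
  by field; rewrite ?n3.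
rewrite /= (@eq_gsum _ c m _ (fun k0 => Phi k.+1 k0 - Phi k.+1 (k0 - 1))).
  by rewrite gsum_tele Phi0 subr0.
by move=> k0; rewrite Pdiff IH.
Qed.
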